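(* For integers $n\ge k\ge1$ define integers $A_h^{k,n}$ ($h\in\mathbb{Z}$) by $A_h^{k,n}=0$ if $h>k$ or $h\le0$, $A_k^{k,n}=1$, and for $1\le h\le k-1$ recursively (downwards in $h$) \[A_h^{k,n}=-\sum_{j=h+1}^{k}(-1)^{\lfloor\frac{j-h+1}{2}\rfloor}\binom{n-j+\lfloor\frac{j-h}{2}\rfloor}{\lfloor\frac{j-h}{2}\rfloor}A_j^{k,n},\] and set $A_h^{k,n}=0$ for all $h$ when $k\le 0$. Then for $k\ge2$ and $1\le h\le k-1$: (1) $A_{h+1}^{k,n}=A_h^{k-1,n-1}$; (2) $A_h^{k,k}=A_h^{k-1,k-1}+A_h^{k-2,k-1}$; (3) if $k<n$, $A_h^{k,n}=A_h^{k,n-1}+A_h^{k-2,n-1}$.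
   Context: $\binom{a}{b}$ denotes the ordinary binomial coefficient and $\lfloor x\rfloor$ the integer part. *)

(* Defs.v *)
From mathcomp Require Import all_boot all_order all_algebra.
Set Implicit Arguments. Unset Strict Implicit. Unset Printing Implicit Defensive.
Import Order.TTheory GRing.Theory Num.Theory.
Local Open Scope ring_scope.

(* Afuel m k n h : the downward recursion for A_h^{k,n}, with fuel m
   (fuel k.+1 suffices, since each recursive call is at some j > h and
   needs at most k - j + 1 fuel). Indices h, k, n are naturals; the
   paper's A_h^{k,n} = 0 for h <= 0 and for k <= 0, which is covered
   since h = 0 gives 0 and k = 0 forces h = 0 or h > k. *)
Fixpoint Afuel (m k n h : nat) {struct m} : int :=
  match m with
  | 0%N => 0
  | m'.+1 =>
    if (k < h)%N || (h == 0%N) then 0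
    else if h == k then 1
    else - \sum_(h.+1 <= j < k.+1)
             ((-1) ^+ ((j - h).+1)./2 *
              ('C(n - j + (j - h)./2, (j - h)./2))%:Z *
              Afuel m' k n j)
  end.

Definition A (k n h : nat) : int := Afuel k.+1 k n h.

(* Main.v *)
Require Import Defs.
From mathcomp Require Import all_boot all_order all_algebra zify ring.
Set Implicit Arguments. Unset Strict Implicit. Unset Printing Implicit Defensive.
Import Order.TTheory GRing.Theory Num.Theory.
Local Open Scope ring_scope.

Lemma Gid (M : nat) : forall x p : nat, (M <= x)%N -> (M <= p)%N ->
  \sum_(e < M.+1) (-1)^+e * ('C(M, e))%:Z * ('C(x - e, p))%:Z = ('C(x - M, p - M))%:Z.
Proof.
elim: M => [|M IH] x p Hx Hp.
  by rewrite big_ord1 /= expr0 mul1r bin0 mul1r !subn0.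
have IH1 := IH (x.-1) p ltac:(lia) ltac:(lia).
have IH0 := IH x p ltac:(lia) ltac:(lia).
rewrite big_ord_recl /= expr0 mul1r bin0 mul1r subn0.
rewrite big_ord_recl /= expr0 mul1r bin0 mul1r subn0 in IH0.
have -> : \sum_(i < M.+1) (-1) ^+ (bump 0 i) * ('C(M.+1, bump 0 i))%:Z * ('C(x - bump 0 i, p))%:Z
  = \sum_(i < M.+1) ((-1) ^+ i.+1 * ('C(M, i.+1))%:Z * ('C(x - i.+1, p))%:Z)
    - \sum_(i < M.+1) ((-1) ^+ i * ('C(M, i))%:Z * ('C(x.-1 - i, p))%:Z).
  rewrite -sumrB; apply: eq_bigr => i _.
  rewrite /bump /= add1n binS PoszD exprS.
  have -> : (x - i.+1 = x.-1 - i)%N by lia.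
  ring.
rewrite IH1 big_ord_recr /= (@bin_small M M.+1) // mulr0 mul0r addr0.
have -> : \sum_(i < M) (-1) ^+ i.+1 * ('C(M, i.+1))%:Z * ('C(x - i.+1, p))%:Z
   = ('C(x - M, p - M))%:Z - ('C(x, p))%:Z.
  rewrite -IH0 /bump /=. ring.
have -> : (x - M = (x - M.+1).+1)%N by lia.
have -> : (p - M = (p - M.+1).+1)%N by lia.
have -> : (x.-1 - M = (x - M.+1))%N by lia.
rewrite binS PoszD. ring.
Qed.
Lemma trin b e L : (e <= L)%N -> (L <= b)%N ->
  ('C(b, e) * 'C(b - e, L - e) = 'C(L, e) * 'C(b, L))%N.
Proof.
move=> HeL HLb.
have Hpos : (0 < e`! * (L - e)`! * (b - L)`!)%N by rewrite !muln_gt0 !fact_gt0.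
apply/eqP; rewrite -(eqn_pmul2r Hpos); apply/eqP.
have H1 := bin_fact (n:=b) (m:=e) ltac:(lia).
have H2 := bin_fact (n:=b - e) (m:=L - e) ltac:(lia).
have H3 := bin_fact (n:=L) (m:=e) ltac:(lia).
have H4 := bin_fact (n:=b) (m:=L) ltac:(lia).
have E : (b - e - (L - e) = b - L)%N by lia.
rewrite E in H2.
transitivity ('C(b, e) * e`! * ('C(b - e, L - e) * ((L - e)`! * (b - L)`!)))%N.
  by rewrite -!mulnA; congr (_ * _)%N; rewrite mulnCA !mulnA.
rewrite H2.
transitivity ('C(L, e) * (e`! * (L - e)`!) * ('C(b, L) * (b - L)`!))%N.
  2: by rewrite -!mulnA; congr (_ * _)%N; rewrite !mulnA; congr (_ * _)%N; rewrite mulnC !mulnA.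
rewrite H3; transitivity b`!; first by rewrite -H1; ring. by rewrite -H4; ring.

Qed.

Definition tt (N D d : nat) : int := (-1)^+((d.+1)./2) * ('C(N - d + d./2, d./2))%:Z * ('C(N - d, (D - d)./2))%:Z.

Lemma sum2 (f : nat -> int) m : \sum_(d < m.*2) f d = \sum_(e < m) (f (e.*2) + f (e.*2).+1).
Proof.
elim: m => [|m IH]; first by rewrite !big_ord0.
rewrite doubleS !big_ord_recr /= IH addrA.
done.
Qed.

Lemma tt_even N D M e : D./2 = M -> (e <= M)%N -> (D <= N)%N ->
  tt N D (e.*2) = (-1)^+e * ('C(M, e))%:Z * ('C(N - e, M))%:Z.
Proof.
move=> HM He HD; rewrite /tt.
have -> : ((e.*2).+1./2 = e)%N by lia.
have -> : ((e.*2)./2 = e)%N by lia.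
have -> : (N - e.*2 + e = N - e)%N by lia.
have -> : ((D - e.*2)./2 = M - e)%N by lia.
have -> : (N - e.*2 = N - e - e)%N by lia.
rewrite -mulrA -PoszM trin ?PoszM ?mulrA //; lia.
Qed.

Lemma tt_odd N D L e : ((D - e.*2 - 1)./2 = L - e)%N -> (e <= L)%N -> (L <= N.-1 - e)%N ->
  tt N D (e.*2).+1 = - ((-1)^+e * ('C(L, e))%:Z * ('C(N.-1 - e, L))%:Z).
Proof.
move=> HM He HD; rewrite /tt.
have -> : ((e.*2).+2./2 = e.+1)%N by lia.
have -> : ((e.*2).+1./2 = e)%N by lia.
have -> : (N - (e.*2).+1 + e = N.-1 - e)%N by lia.
have -> : ((D - (e.*2).+1)./2 = L - e)%N by lia.
have -> : (N - (e.*2).+1 = N.-1 - e - e)%N by lia.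
rewrite -mulrA -PoszM trin ?PoszM ?mulrA ?exprS; [ring | lia | lia].
Qed.

Lemma Sid N D : (1 <= D)%N -> (D <= N)%N -> \sum_(d < D.+1) tt N D d = 0.
Proof.
move=> H1 HD.
have [Dodd|Deven] := boolP (odd D).
  set M := D./2.
  have E : D.+1 = (M.+1).*2 by rewrite /M; lia.
  rewrite E sum2.
  rewrite (eq_bigr (fun e : 'I_M.+1 => (-1)^+e * ('C(M, e))%:Z * ('C(N - e, M))%:Z
              - (-1)^+e * ('C(M, e))%:Z * ('C(N.-1 - e, M))%:Z)); last first.
    move=> i _; have Hi := ltn_ord i.
    have a1 : (D - i.*2 - 1)./2 = (M - i)%N by rewrite /M in Hi *; lia.
    have a2 : (M <= N.-1 - i)%N by rewrite /M in Hi *; lia.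
    have a3 : (i <= M)%N by lia.
    by rewrite (@tt_even N D M) ?(@tt_odd N D M).
  rewrite sumrB !Gid; try (rewrite /M; lia).
  by rewrite !subnn !bin0 subrr.
set M := D./2.
have [M' EM'] : exists M', M = M'.+1 by exists M.-1; rewrite /M; lia.
have E : D.+1 = (M.*2).+1 by rewrite /M ; lia.
rewrite E big_ord_recr /= sum2.
rewrite (eq_bigr (fun e : 'I_M => (-1)^+e * ('C(M, e))%:Z * ('C(N - e, M))%:Z
              - (-1)^+e * ('C(M', e))%:Z * ('C(N.-1 - e, M'))%:Z)); last first.
  move=> i _; have Hi := ltn_ord i.
  have a1 : (D - i.*2 - 1)./2 = (M' - i)%N by rewrite /M in EM' Hi *; lia.
  have a2 : (M' <= N.-1 - i)%N by rewrite /M in EM' Hi *; lia.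
  have a3 : (i <= M')%N by rewrite /M in EM' Hi *; lia.
  have a4 : (i <= M)%N by lia.
  by rewrite (@tt_even N D M) ?(@tt_odd N D M').
rewrite sumrB (@tt_even N D M M) //.
have G1 := @Gid M N M ltac:(rewrite /M; lia) (leqnn _).
rewrite big_ord_recr /= in G1.
have G2 := @Gid M' N.-1 M' ltac:(rewrite /M in EM'; lia) (leqnn _).
rewrite EM' in G1 *. rewrite G2.
have X : forall a b c : int, a + c = 1 -> b = 1 -> a - b + c = 0 by move=> a b c <- ->; ring.
apply: X; last by rewrite subnn bin0.
by rewrite G1 subnn bin0.
Qed.

Definition F (k n h : nat) : int :=
  if (k < h)%N || (h == 0%N) then 0 else ('C(n - h, (k - h)./2))%:Z.

Lemma Fpos k n h : (1 <= h)%N -> (h <= k)%N -> F k n h = ('C(n - h, (k - h)./2))%:Z.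
Proof. move=> H1 H2; rewrite /F ifF //; apply/negbTE; rewrite negb_or; apply/andP; split; lia. Qed.

Lemma Fzero k n h : (k < h)%N -> F k n h = 0.
Proof. by move=> H; rewrite /F H. Qed.

Lemma Frec k n h : (1 <= h)%N -> (h < k)%N -> (k <= n)%N ->
  F k n h = - \sum_(h.+1 <= j < k.+1)
             ((-1) ^+ ((j - h).+1)./2 * ('C(n - j + (j - h)./2, (j - h)./2))%:Z * F k n j).
Proof.
move=> H1 H2 H3.
have := @Sid (n - h) (k - h) ltac:(lia) ltac:(lia).
rewrite big_ord_recl => /eqP; rewrite addr_eq0 => /eqP H.
have -> : F k n h = tt (n - h) (k - h) (@ord0 (k - h)).
  by rewrite Fpos ?(ltnW H2) // /tt /= expr0 mul1r subn0 bin0 mul1r subn0.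
rewrite H; congr (- _).
rewrite -{1}(add0n h.+1) big_addn subSS big_mkord.
apply: eq_bigr => i _; have Hi := ltn_ord i.
rewrite /tt /bump /= Fpos; [|lia|lia].
have -> : (i + h.+1 - h = (1 + i).+1 - 1)%N by lia.
have -> : (n - (i + h.+1) = n - h - (1 + i))%N by lia.
have -> : (k - (i + h.+1) = k - h - (1 + i))%N by lia.
by rewrite subn1.
Qed.

Lemma Afuel_F k n : (k <= n)%N -> forall m h, (k - h < m)%N -> Afuel m k n h = F k n h.
Proof.
move=> Hkn; elim=> [|m IH] h Hm; first by [].
rewrite /=; case: ifP => Hc; first by rewrite /F Hc.
case: eqP => [->|Hne]; first by rewrite Fpos ?subnn ?bin0 //; lia.
rewrite Frec; [|lia|lia|lia].
congr (- _); apply: eq_big_nat => j /andP [Hj1 Hj2].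
rewrite IH //; lia.
Qed.

Lemma AF k n h : (k <= n)%N -> A k n h = F k n h.
Proof. move=> H; rewrite /A Afuel_F //; lia. Qed.

Lemma binmid m : 'C(m.+2, (m.+2)./2) = ('C(m.+1, (m.+1)./2) + 'C(m.+1, m./2))%N.
Proof.
have -> : ((m.+2)./2 = (m./2).+1)%N by lia.
rewrite binS; congr (_ + _)%N.
have [Ho|He] := boolP (odd m).
  by have -> : ((m.+1)./2 = (m./2).+1)%N by lia.
rewrite -bin_sub; last by lia.
congr 'C(_, _); lia.
Qed.

Theorem lemma5p7 (k n h : nat) :
  (k <= n)%N -> (2 <= k)%N -> (1 <= h)%N -> (h <= k - 1)%N ->
  [/\ A k n h.+1 = A (k - 1) (n - 1) h,
      A k k h = A (k - 1) (k - 1) h + A (k - 2) (k - 1) h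
    & ((k < n)%N -> A k n h = A k (n - 1) h + A (k - 2) (n - 1) h)].
Proof.
move=> Hkn Hk Hh Hhk; split.
- rewrite !AF; [|lia|lia].
  rewrite !Fpos; [|lia|lia|lia|lia].
  congr (Posz 'C(_, _)); lia.
- rewrite !AF; [|lia|lia|lia].
  have [E|E] := boolP (h == k - 1)%N.
    move/eqP: E => E.
    rewrite (Fzero (k:=k-2)); last by lia.
    rewrite !Fpos; [|lia|lia|lia|lia].
    have -> : (k - h = 1)%N by lia.
    by have -> : (k - 1 - h = 0)%N by lia.
  rewrite !Fpos; [|lia|lia|lia|lia|lia|lia].
  have [m Em] : exists m, (k - h = m.+2)%N by exists (k - h - 2)%N; lia.
  have -> : (k - 1 - h = m.+1)%N by lia.
  have -> : ((k - 2 - h)./2 = m./2)%N by lia.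
  by rewrite Em binmid PoszD.
- move=> Hlt; rewrite !AF; [|lia|lia|lia].
  have [E|E] := boolP (k - 2 < h)%N.
    rewrite (Fzero (k:=k-2)) // !Fpos; [|lia|lia|lia|lia].
    have -> : ((k - h)./2 = 0)%N by lia.
    by rewrite !bin0 addr0.
  rewrite !Fpos; [|lia|lia|lia|lia|lia|lia].
  have -> : (n - h = (n - 1 - h).+1)%N by lia.
  have -> : ((k - h)./2 = ((k - 2 - h)./2).+1)%N by lia.
  by rewrite binS PoszD.
Qed.
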